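(* Let $n\geq 1$. For every finite frame $\mathcal{F}$ in which all theorems of $\mathrm{K4}\mathbb{C}_n$ are valid, there exist a hereditarily $(n+1)$-irresolvable T$_D$ space $X$ and a surjective $d$-morphism from $X$ onto $\mathcal{F}$.
   Context: Modal formulas use propositional variables, Boolean connectives and $\Diamond,\Box$. A normal logic is a set of formulas containing all tautologies and all instances of $\Box(\varphi\to\psi)\to(\Box\varphi\to\Box\psi)$, closed under modus ponens and $\Box$-generalisation. For $n\ge1$ and formulas $\varphi_0,\dots,\varphi_n$, let $\mathbb{P}_n(\varphi_0,\dots,\varphi_n)=\Diamond(\varphi_1\land\Diamond(\varphi_2\land\cdots\land\Diamond(\varphi_n\land\Diamond\varphi_0))\cdots)$, let $\mathbb{D}_n(\varphi_0,\dots,\varphi_n)=\bigwedge_{i<j\le n}\neg(\varphi_i\land\varphi_j)$, and $\Box^*\psi=\psi\land\Box\psi$. $\mathbb{C}_n$ is the scheme $\Box^*\mathbb{D}_n(\varphi_0,\dots,\varphi_n)\to(\Diamond\varphi_0\to\Diamond(\varphi_0\land\neg\mathbb{P}_n(\varphi_0,\dots,\varphi_n)))$. $\mathrm{K4}\mathbb{C}_n$ is the smallest normal logic containing all instances of $\Diamond\Diamond\varphi\to\Diamond\varphi$ and of $\mathbb{C}_n$. Validity in a Kripke frame $(W,R)$ is the standard relational one ($\Diamond\varphi$ true at $x$ iff $\varphi$ true at some $R$-successor of $x$). For a space $X$ and $Y\subseteq X$, $\mathrm{d}_XY$ is the set of limit points of $Y$ ($x$ such that every $O-\{x\}$, $O$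 an open neighbourhood of $x$, meets $Y$). $S$ is crowded in $X$ if $S\subseteq\mathrm{d}_XS$. $X$ is T$_D$ if $\mathrm{d}_X\{x\}$ is closed for all $x$. $X$ is $k$-resolvable if it has $k$ pairwise disjoint non-empty dense subsets, and hereditarily $k$-irresolvable if no non-empty subspace is $k$-resolvable. For a transitive frame $\mathcal{F}=(W,R)$, $W_R$ denotes $W$ with the topology whose open sets are the $R$-up-sets. A $d$-morphism from $X$ to $\mathcal{F}$ is $f:X\to W$ such that (i) $f$ is continuous and open as a map $X\to W_R$; (ii) if $w$ is $R$-reflexive then $f^{-1}\{w\}$ is crowded in $X$; (iii) if $w$ is $R$-irreflexive then $f^{-1}\{w\}\cap\mathrm{d}_Xf^{-1}\{w\}=\emptyset$. *)

(* Defs.v *)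
From HB Require Import structures.
From mathcomp Require Import all_boot all_order.
From mathcomp Require Import all_classical topology.
Set Implicit Arguments. Unset Strict Implicit. Unset Printing Implicit Defensive.
Local Open Scope classical_set_scope.

Inductive form : Type :=
| Var : nat -> form
| Bot : form
| Imp : form -> form -> form
| Box : form -> form.

Definition Neg (a : form) : form := Imp a Bot.
Definition Top : form := Neg Bot.
Definition Or (a b : form) : form := Imp (Neg a) b.
Definition And (a b : form) : form := Neg (Imp a (Neg b)).
Definition Dia (a : form) : form := Neg (Box (Neg a)).

Fixpoint beval (v : form -> bool) (a : form) : bool :=
  match a with
  | Var _ => v a
  | Bot => false
  | Imp b c => (~~ beval v b) || beval v c
  | Box _ => v a
  end.

(* a (substitution instance of a) propositional tautology *)
Definition tautology (a : form) : Prop := forall v, beval v a.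

Inductive normal_thm (Ax : form -> Prop) : form -> Prop :=
| nt_taut a : tautology a -> normal_thm Ax a
| nt_K a b : normal_thm Ax (Imp (Box (Imp a b)) (Imp (Box a) (Box b)))
| nt_ax a : Ax a -> normal_thm Ax a
| nt_mp a b : normal_thm Ax (Imp a b) -> normal_thm Ax a -> normal_thm Ax b
| nt_nec a : normal_thm Ax a -> normal_thm Ax (Box a).

(* P_n(phi_0,...,phi_n) = <>(phi_1 /\ <>(phi_2 /\ ... /\ <>(phi_n /\ <>phi_0))) *)
Fixpoint Pchain (phi : nat -> form) (i m : nat) : form :=
  match m with
  | 0 => Dia (phi 0)
  | m'.+1 => Dia (And (phi i) (Pchain phi i.+1 m'))
  end.
Definition Pn (n : nat) (phi : nat -> form) : form := Pchain phi 1 n.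

(* D_n(phi_0,...,phi_n) = /\_{i<j<=n} ~(phi_i /\ phi_j) *)
Definition Dn (n : nat) (phi : nat -> form) : form :=
  foldr And Top
    (flatten [seq [seq Neg (And (phi i) (phi j)) | i <- iota 0 j] | j <- iota 0 n.+1]).

Definition BoxStar (a : form) : form := And a (Box a).

Definition Cn (n : nat) (phi : nat -> form) : form :=
  Imp (BoxStar (Dn n phi))
      (Imp (Dia (phi 0)) (Dia (And (phi 0) (Neg (Pn n phi))))).

Definition K4Cn_axiom (n : nat) (a : form) : Prop :=
  (exists b, a = Imp (Dia (Dia b)) (Dia b)) \/ (exists phi, a = Cn n phi).

Definition K4Cn (n : nat) : form -> Prop := normal_thm (K4Cn_axiom n).

Fixpoint ksat (W : Type) (R : W -> W -> Prop) (V : nat -> W -> Prop)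
    (w : W) (a : form) : Prop :=
  match a with
  | Var p => V p w
  | Bot => False
  | Imp b c => ksat R V w b -> ksat R V w c
  | Box b => forall u, R w u -> ksat R V u b
  end.

Definition frame_valid (W : Type) (R : W -> W -> Prop) (a : form) : Prop :=
  forall V w, ksat R V w a.

Definition dset (X : topologicalType) (Y : set X) : set X := limit_point Y.

Definition crowded_in (X : topologicalType) (S : set X) : Prop := S `<=` dset S.

Definition TD_space (X : topologicalType) : Prop :=
  forall x : X, closed (dset [set x]).

(* D is dense in the subspace Y (subspace topology: open sets are U `&` Y) *)
Definition dense_in_subspace (X : topologicalType) (Y D : set X) : Prop :=
  forall U : set X, open U -> U `&` Y !=set0 -> U `&` D !=set0.

Definition subspace_resolvable (X : topologicalType) (k : nat) (Y : set X) : Prop :=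
  exists D : 'I_k -> set X,
    [/\ forall i, D i `<=` Y,
        forall i, D i !=set0,
        forall i, dense_in_subspace Y (D i)
      & forall i j, i != j -> D i `&` D j = set0].

Definition hereditarily_irresolvable (X : topologicalType) (k : nat) : Prop :=
  forall Y : set X, Y !=set0 -> ~ subspace_resolvable k Y.

Definition upset (W : Type) (R : W -> W -> Prop) (U : set W) : Prop :=
  forall w u, U w -> R w u -> U u.

Definition d_morphism (X : topologicalType) (W : Type) (R : W -> W -> Prop)
    (f : X -> W) : Prop :=
  [/\ (* continuous into W_R *) forall U, upset R U -> open (f @^-1` U),
      (* open into W_R *) forall O : set X, open O -> upset R (f @` O),
      forall w, R w w -> crowded_in (f @^-1` [set w])
    & forall w, ~ R w w -> f @^-1` [set w] `&` dset (f @^-1` [set w]) = set0].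

(* Main.v *)
Require Import Defs.
From HB Require Import structures.
From mathcomp Require Import all_boot all_order.
From mathcomp Require Import all_classical topology.
Set Implicit Arguments. Unset Strict Implicit. Unset Printing Implicit Defensive.
Local Open Scope classical_set_scope.

Lemma UF_ex : { G : set_system nat | UltraFilter G /\ eventually `<=` G }.
Proof. apply: cid. exact: ultraFilterLemma. Qed.
Definition UF := proj1_sig UF_ex.
Lemma UF_ultra : UltraFilter UF. Proof. by case: (proj2_sig UF_ex). Qed.
Lemma UF_ev : eventually `<=` UF. Proof. by case: (proj2_sig UF_ex). Qed.
Lemma UF_pf : ProperFilter UF. Proof. by case: UF_ultra. Qed.
Lemma UFT : UF setT. Proof. have := UF_pf. move=> ?; exact: filterT. Qed.
Lemma UFI A B : UF A -> UF B -> UF (A `&` B). Proof. have := UF_pf => ?; exact: filterI. Qed.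
Lemma UFS A B : A `<=` B -> UF A -> UF B. Proof. have := UF_pf => ?; exact: filterS. Qed.
Lemma UF0 A : UF A -> exists m, A m.
Proof. move=> HA; have := UF_pf => PF. by have [m ?] := filter_ex HA; exists m. Qed.
Lemma UFC A : ~ UF A -> UF (~` A).
Proof. by case: (in_ultra_setVsetC A UF_ultra). Qed.
Lemma UF1 k : UF [set m | m <> k].
Proof. apply: UF_ev. exists k.+1 => // m /= Hm Hmk. by subst; rewrite ltnn in Hm. Qed.

Definition Xsp (W : finType) (R : rel W) : Type := (W * nat)%type.
HB.instance Definition _ (W : finType) (R : rel W) := Choice.on (Xsp R).
Definition sec (W : finType) (R : rel W) (O : set (Xsp R)) (u : W) : set nat := [set m | O (u, m)].
Definition xop (W : finType) (R : rel W) (O : set (Xsp R)) : Prop :=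
  forall w k, O (w, k) -> forall u, R w u -> UF (sec O u).

Section Top.
Variables (W : finType) (R : rel W).
Lemma xopT : xop (setT : set (Xsp R)). Proof. move=> w k _ u _. exact: UFT. Qed.
Lemma xopI : setI_closed (@xop W R).
Proof. move=> A B HA HB w k [Ha Hb] u Hu. exact: UFI (HA _ _ Ha _ Hu) (HB _ _ Hb _ Hu). Qed.
Lemma xopU (I : Type) (f : I -> set (Xsp R)) : (forall i, xop (f i)) -> xop (\bigcup_i f i).
Proof. move=> Hf w k [i _ Hi] u Hu. apply: UFS (Hf i _ _ Hi _ Hu). by move=> m Hm; exists i. Qed.
End Top.

HB.instance Definition _ (W : finType) (R : rel W) := isOpenTopological.Build (Xsp R) (@xopT W R) (@xopI W R) (@xopU W R).

Lemma openP (W : finType) (R : rel W) (O : set (Xsp R)) : open O <-> xop O.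
Proof. by []. Qed.

Lemma nbhsP (W : finType) (R : rel W) (p : Xsp R) (A : set (Xsp R)) :
  nbhs p A <-> exists B, [/\ xop B, B p & B `<=` A].
Proof. by []. Qed.
From Stdlib Require List.
Section Modal.
Variables (W : Type) (RR : W -> W -> Prop) (V : nat -> W -> Prop).

Lemma ksat_Dia w a : ksat RR V w (Dia a) <-> exists u, RR w u /\ ksat RR V u a.
Proof.
rewrite /=; split.
- move=> H. apply: contrapT => Hn; apply: H => u Hu Ha. by apply: Hn; exists u.
- by case=> u [Hu Ha] H; exact: H _ Hu Ha.
Qed.

Lemma ksat_And w a b : ksat RR V w (And a b) <-> ksat RR V w a /\ ksat RR V w b.
Proof.
rewrite /=; split.
- move=> H; split; apply: contrapT => Hn; apply: H => // Ha Hb //.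
- by case=> Ha Hb H; exact: H.
Qed.

Lemma ksat_foldr w (l : seq form) :
  (forall a, List.In a l -> ksat RR V w a) -> ksat RR V w (foldr And Top l).
Proof.
elim: l => [|a l IH] H /=; first by [].
apply/ksat_And; split; first by apply: H; left.
by apply: IH => b Hb; apply: H; right.
Qed.

Lemma In_flatten (A B : Type) (F : A -> seq B) (s : seq A) b :
  List.In b (flatten (map F s)) -> exists x, List.In x s /\ List.In b (F x).
Proof.
elim: s => [|x s IH] //= /List.in_app_iff [H|H]; first by exists x; split => //; left.
by have [y [Hy Hb]] := IH H; exists y; split => //; right.
Qed.

Lemma In_map (A B : Type) (F : A -> B) (s : seq A) b :
  List.In b (map F s) -> exists x, List.In x s /\ b = F x.
Proof.
elim: s => [|x s IH] //= [H|H]; first by exists x; split => //; left.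
by have [y [Hy Hb]] := IH H; exists y; split => //; right.
Qed.

Lemma In_iota i m j : List.In i (iota m j) -> (i < m + j)%N.
Proof.
elim: j m => [|j IH] m //= [H|H]; first by subst; rewrite addnS ltnS leq_addr.
by have := IH _ H; rewrite addSnnS.
Qed.

Lemma ksat_Dn w n :
  (forall i j x, i <> j -> V i x -> V j x -> False) -> ksat RR V w (Dn n Var).
Proof.
move=> Hd; apply: ksat_foldr => a Ha.
have [j [_ Hj]] := In_flatten Ha.
have [i [Hi ->]] := In_map Hj.
have := In_iota Hi; rewrite add0n => Hij.
move=> /ksat_And [/= H1 H2]. apply: (Hd i j w) => // Heq.
by subst; rewrite ltnn in Hij.
Qed.
End Modal.

Section Frame.
Variables (n : nat) (W : finType) (R : rel W).
Hypothesis Hval : forall a, K4Cn n a -> frame_valid (fun w u => R w u) a.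

Lemma Rtrans a b c : R a b -> R b c -> R a c.
Proof.
move=> Hab Hbc.
have H := Hval (nt_ax (or_introl (ex_intro _ (Var 0) erefl))) (fun p x => x = c) a.
have P : ksat (fun w u => R w u) (fun p x => x = c) a (Dia (Dia (Var 0))).
  apply/ksat_Dia; exists b; split => //; apply/ksat_Dia; by exists c.
have /ksat_Dia [u [Hu Hc]] : ksat (fun w u => R w u) (fun p x => x = c) a (Dia (Var 0)) := H P.
by rewrite -Hc.
Qed.

Lemma cluster_small w (g : 'I_n.+1 -> W) :
  (forall i, R w (g i) /\ R (g i) w) -> exists i j, i != j /\ g i = g j.
Proof.
move=> Hg; apply: contrapT => Hn.
have ginj : forall i j, g i = g j -> i = j.
  move=> i j Hij; apply: contrapT => Hne; apply: Hn; exists i, j; split => //.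
  by apply/negP => /eqP.
have Hcl : forall i j, R (g i) (g j).
  by move=> i j; apply: Rtrans (proj2 (Hg i)) (proj1 (Hg j)).
pose V := fun (p : nat) (x : W) => exists k : 'I_n.+1, (k : nat) = p /\ x = g k.
have Hdisj : forall i j x, i <> j -> V i x -> V j x -> False.
  move=> i j x Hij [k1 [E1 ->]] [k2 [E2 /ginj E]]. by apply: Hij; rewrite -E1 -E2 E.
have HP : forall m i y, (i + m <= n.+1)%N -> (forall j, R y (g j)) ->
    ksat (fun w u => R w u) V y (Pchain Var i m).
  elim=> [|m IH] i y Him Hy.
    apply/ksat_Dia; exists (g ord0); split => //; by exists ord0.
  have Hi : (i < n.+1)%N by move: Him; rewrite addnS; apply: leq_trans; rewrite ltnS leq_addr.
  apply/ksat_Dia; exists (g (Ordinal Hi)); split => //.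
  apply/ksat_And; split; first by exists (Ordinal Hi).
  apply: IH; first by rewrite addSnnS.
  by move=> j; apply: Hcl.
have H := Hval (@nt_ax (K4Cn_axiom n) (Cn n Var) (or_intror (ex_intro (fun phi => Cn n Var = Cn n phi) Var erefl))) V (g ord0).
rewrite /Cn in H.
have H1 : ksat (fun w u => R w u) V (g ord0) (BoxStar (Dn n Var)).
  apply/ksat_And; split; first exact: ksat_Dn.
  move=> u _; exact: ksat_Dn.
have H2 : ksat (fun w u => R w u) V (g ord0) (Dia (Var 0)).
  apply/ksat_Dia; exists (g ord0); split; [exact: Hcl | by exists ord0].
have HH : ksat (fun w u => R w u) V (g ord0) (Dia (And (Var 0) (Neg (Pn n Var)))) := H H1 H2.
move/ksat_Dia: HH => [u [_ HH]]; move/ksat_And: HH => [[k [Ek Eu]] Hneg].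
subst u; apply: Hneg. apply: HP; first by rewrite add1n.
by move=> j; apply: Hcl.
Qed.
End Frame.
Lemma exists_max (W : finType) (R : rel W) (P : W -> Prop) :
  (forall a b c, R a b -> R b c -> R a c) ->
  (exists w, P w) -> exists w, P w /\ forall v, P v -> R w v -> R v w.
Proof.
move=> Rt [w0 Pw0].
pose S w := finset (fun u => `[< P u >] && (R w u || (u == w))).
suff : forall N w, P w -> (#|S w| <= N)%N -> exists w, P w /\ forall v, P v -> R w v -> R v w.
  by move=> /(_ _ w0 Pw0 (leqnn _)).
elim=> [|N IH] w Pw HN.
  have Hw : w \in S w by rewrite /S inE eqxx orbT andbT; apply/asboolP.
  have : (0 < #|S w|)%N by apply/card_gt0P; exists w.
  by rewrite ltnNge HN.
have [Hmax|] := pselect (forall v, P v -> R w v -> R v w); first by exists w.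
move=> /existsNP [v /not_implyP [Pv /not_implyP [Rwv nRvw]]].
apply: (IH v Pv).
have Hp : S v \proper S w.
  apply/fintype.properP; split.
    apply/fintype.subsetP => u; rewrite /S !inE => /andP [Pu Hu].
    apply/andP; split => //; apply/orP; left.
    case/orP: Hu => [Rvu|/eqP ->]; last by [].
    exact: (Rt _ _ _ Rwv Rvu).
  exists w; first by rewrite /S !inE eqxx orbT andbT; apply/asboolP.
  rewrite /S !inE negb_and; apply/orP; right; rewrite negb_or; apply/andP; split.
    by apply/negP.
  by apply/eqP => E; subst; apply: nRvw.
by have := proper_card Hp; move=> H; rewrite -ltnS; apply: leq_trans H HN.
Qed.

Theorem theorem5 (n : nat) (W : finType) (R : rel W) :
  (1 <= n)%N ->
  (forall a, K4Cn n a -> frame_valid (fun w u => R w u) a) ->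
  exists (X : topologicalType) (f : X -> W),
    [/\ hereditarily_irresolvable X n.+1,
        TD_space X,
        d_morphism (fun w u => R w u) f
      & forall w : W, exists x : X, f x = w].
Proof.
move=> n1 Hval.
have Rt := Rtrans Hval.
exists (Xsp R), (fun x : Xsp R => x.1); split.
-
  move=> Y [y0 Yy0] [D [DY Dne Dden Ddisj]].
  have [w [[k Ywk] Hmax]] : exists w, (exists k, Y (w, k)) /\
      forall v, (exists m, Y (v, m)) -> R w v -> R v w.
    apply: (exists_max (P := fun w => exists k, Y (w, k))) => //.
    by exists y0.1, y0.2; case: y0 Yy0.
  have Ha : exists u, R w u /\ UF (sec Y u).
    apply: contrapT => Hn.
    pose B : set (Xsp R) := [set z | z = (w, k) \/ (R w z.1 /\ ~ Y z)].
    have HB : xop B.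
      have key : forall u, R w u -> UF (sec B u).
        move=> u Hu; have HY : ~ UF (sec Y u) by move=> H; apply: Hn; exists u.
        apply: UFS (UFC HY) => m Hm; right; split => //.
      move=> v m [[-> _]|[Hv _]] u Hu; apply: key => //.
      exact: Rt Hv Hu.
    have Hdi : forall i, D i (w, k).
      move=> i; have [z [Bz Dz]] : B `&` D i !=set0.
        by apply: (Dden i B HB); exists (w, k); split => //; left.
      case: Bz => [Ez|[_ nY]]; first by rewrite -Ez.
      by exfalso; apply: nY; apply: DY Dz.
    have Hne : (ord0 : 'I_n.+1) != ord_max by rewrite -(inj_eq val_inj) /= eq_sym -lt0n.
    have := Ddisj _ _ Hne; rewrite -subset0 => /(_ (w, k)); apply; split; exact: Hdi.
  have Hb : forall i, exists u, R w u /\ UF (sec (D i) u).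
    move=> i; apply: contrapT => Hn.
    pose B : set (Xsp R) := [set z | R w z.1 /\ ~ D i z].
    have HB : xop B.
      move=> v m [Hv _] u Hu; have Hwu := Rt _ _ _ Hv Hu.
      have HD : ~ UF (sec (D i) u) by move=> H; apply: Hn; exists u.
      apply: UFS (UFC HD) => m' Hm'; by split.
    have [u [Hu HY]] := Ha.
    have HD : ~ UF (sec (D i) u) by move=> H; apply: Hn; exists u.
    have [m [Ym nDm]] := UF0 (UFI HY (UFC HD)).
    have [z [[_ nDz] Dz]] : B `&` D i !=set0.
      by apply: (Dden i B HB); exists (u, m).
    by apply: nDz.
  have [g Hg] := choice Hb.
  have Hcl : forall i, R w (g i) /\ R (g i) w.
    move=> i; have [Hwg HU] := Hg i; split => //.
    apply: Hmax => //; have [m Hm] := UF0 HU; exists m; exact: DY Hm.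
  have [i [j [Hij Eg]]] := cluster_small Hval Hcl.
  have [_ HUi] := Hg i; have [_ HUj] := Hg j; rewrite Eg in HUi.
  have [m [Hmi Hmj]] := UF0 (UFI HUi HUj).
  have := Ddisj _ _ Hij; rewrite -subset0 => /(_ (g j, m)); apply; by split.
-
  move=> x.
  suff -> : dset [set x] = set0 by exact: closed0.
  rewrite -subset0 => y Hy.
  have [Eyx|Nyx] := pselect (y = x).
    have [z [Hz Ezx _]] := Hy setT filterT.
    by move: Hz; rewrite Ezx Eyx eqxx.
  have Hop : xop [set z : Xsp R | z <> x].
    move=> v m _ u _; apply: UFS (UF1 x.2) => m' Hm' E; apply: Hm'; by rewrite -E.
  have [z [_ Ezx Hz]] := Hy [set z | z <> x] (ex_intro _ _ (And3 Hop Nyx (fun z h => h))).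
  exact: Hz Ezx.
- split.
  + move=> U HU; apply/openP => v m /= Uv u Hu. apply: UFS UFT => m' _. exact: HU Uv Hu.
  + move=> O /openP HO w u [[w' k] Ok <-] /= Hu.
    have [m Hm] := UF0 (HO _ _ Ok _ Hu).
    by exists (u, m).
  + move=> w Rww [w' k] /= Ew A [B [HB Bx BA]].
    have [m [Bm Hmk]] := UF0 (UFI (HB _ _ Bx _ (eq_ind_r (fun a => R a w) Rww Ew)) (UF1 k)).
    exists (w, m); split => //.
      by apply/negP => /eqP [_ E]; apply: Hmk; rewrite E.
    exact: BA.
  + move=> w nRww; rewrite -subset0 => [[w' k]] [/= Ew Hl].
    subst w'.
    pose B : set (Xsp R) := [set z | z = (w, k) \/ R w z.1].
    have HB : xop B.
      move=> v m Hv u Hu; apply: UFS UFT => m' _; right => /=.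
      case: Hv => [E|Hv]; last exact: Rt Hv Hu.
      by case: E => Ev _; rewrite -Ev.
    have [z [Hz Ez [Ez2|Rz]]] := Hl B (ex_intro _ _ (And3 HB (or_introl erefl) (fun z h => h))).
      by move: Hz; rewrite Ez2 eqxx.
    by apply: nRww; move: Rz; rewrite /= Ez.
- by move=> w; exists (w, 0%N).
Qed.
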